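(* Let $T\subset\mathbb{R}^2$ be a convex polytope and $\Delta\subset\mathbb{R}^2$ a triangle. Let $(\lambda^*,u^* )$ be an optimal solution of the problem: maximize $\lambda$ subject to $\lambda\ge 0$, $u\in\mathbb{R}^2$, $\lambda\Delta+u\subseteq T$. If there exists a $(\Delta,T)$-inbody, then $S^*=\lambda^*\Delta+u^*$ is the only $(\Delta,T)$-inbody.
   Context: A triangle is the convex hull of three affinely independent points. For a convex set $C$ and $z\in\partial C$, $N_C(z)=\{v:\langle v,y-z\rangle\le 0\ \forall y\in C\}$. For a triangle $\Delta\subseteq\mathbb{R}^2$ and a nonempty convex set $T\subseteq\mathbb{R}^2$, a $(\Delta,T)$-inbody is a set $S\subseteq\mathbb{R}^2$ such that: (i) $S=\lambda\Delta+u$ for some $\lambda>0$, $u\in\mathbb{R}^2$; (ii) all three vertices of $S$ lie in $\partial T$; (iii) if $v_1,v_2,v_3$ are the vertices of $S$, there is no line $H$ through the origin such that $N_T(v_1)\cup N_T(v_2)\cup N_T(v_3)$ is contained in one of the two closed half-planes bounded by $H$. *)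

(* Defs.v *)
From HB Require Import structures.
From mathcomp Require Import all_boot all_order all_algebra.
From mathcomp Require Import reals.
Set Implicit Arguments. Unset Strict Implicit. Unset Printing Implicit Defensive.
Import Order.TTheory GRing.Theory Num.Theory.
Local Open Scope ring_scope.

Section Plane.
Variable R : realType.
Definition pt := (R * R)%type.

Definition dot (p q : pt) : R := p.1 * q.1 + p.2 * q.2.
Definition psub (p q : pt) : pt := (p.1 - q.1, p.2 - q.2).
Definition dist2 (p q : pt) : R := dot (psub p q) (psub p q).

Definition conv_hull (s : seq pt) (x : pt) : Prop :=
  exists w : 'I_(size s) -> R,
    (forall i, 0 <= w i) /\ \sum_(i < size s) w i = 1 /\
    x = (\sum_(i < size s) w i * (nth (0, 0) s i).1,
         \sum_(i < size s) w i * (nth (0, 0) s i).2).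

Definition is_polytope (T : pt -> Prop) : Prop :=
  exists s : seq pt, forall x, T x <-> conv_hull s x.

Definition aff_indep (a b c : pt) : Prop :=
  (b.1 - a.1) * (c.2 - a.2) - (b.2 - a.2) * (c.1 - a.1) != 0.

Definition triangle (a b c : pt) : pt -> Prop := conv_hull [:: a; b; c].

Definition hom_pt (lam : R) (u : pt) (y : pt) : pt :=
  (lam * y.1 + u.1, lam * y.2 + u.2).
Definition hom_set (D : pt -> Prop) (lam : R) (u : pt) (x : pt) : Prop :=
  exists y, D y /\ x = hom_pt lam u y.

Definition interior (C : pt -> Prop) (z : pt) : Prop :=
  exists e : R, 0 < e /\ forall y, dist2 y z < e * e -> C y.
Definition closure (C : pt -> Prop) (z : pt) : Prop :=
  forall e : R, 0 < e -> exists y, C y /\ dist2 y z < e * e.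
Definition boundary (C : pt -> Prop) (z : pt) : Prop :=
  closure C z /\ ~ interior C z.

Definition normal_cone (C : pt -> Prop) (z v : pt) : Prop :=
  forall y, C y -> dot v (psub y z) <= 0.

Definition inbody (a b c : pt) (T S : pt -> Prop) : Prop :=
  exists (lam : R) (u : pt),
    0 < lam /\
    (forall x, S x <-> hom_set (triangle a b c) lam u x) /\
    boundary T (hom_pt lam u a) /\ boundary T (hom_pt lam u b) /\
    boundary T (hom_pt lam u c) /\
    ~ (exists h : pt, h <> (0, 0) /\
         forall v, (normal_cone T (hom_pt lam u a) v \/
                    normal_cone T (hom_pt lam u b) v \/
                    normal_cone T (hom_pt lam u c) v) -> 0 <= dot h v).

Definition is_optimal (D T : pt -> Prop) (lam0 : R) (u0 : pt) : Prop :=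
  0 <= lam0 /\ (forall x, hom_set D lam0 u0 x -> T x) /\
  forall (lam : R) (u : pt), 0 <= lam ->
    (forall x, hom_set D lam u x -> T x) -> lam <= lam0.
End Plane.

(* Main.v *)
Require Import Defs.
From HB Require Import structures.
From mathcomp Require Import all_boot all_order all_algebra.
From mathcomp Require Import reals ring lra.
Import Order.TTheory GRing.Theory Num.Theory.
Local Open Scope ring_scope.

From mathcomp Require all_classical all_analysis.
Section Main.
Local Set Implicit Arguments.
Variable R : realType.
Implicit Types (s : seq (pt R)).

Lemma sum_delta n (i : 'I_n) (F : 'I_n -> R) :
  \sum_(j < n) (j == i)%:R * F j = F i.
Proof.
rewrite (bigD1 i) //= eqxx mul1r big1 ?addr0 // => j /negbTE ->.
by rewrite mul0r.
Qed.

Lemma conv_vertex s (i : 'I_(size s)) : conv_hull s (nth (0, 0) s i).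
Proof.
exists (fun j => (j == i)%:R); split; first by move=> j; rewrite ler0n.
split.
  rewrite -[RHS](@sum_delta _ i (fun=> 1)); apply: eq_bigr => j _; by rewrite mulr1.
by rewrite !sum_delta; case: (nth _ _ _).
Qed.

Lemma conv2 s p q (m : R) : conv_hull s p -> conv_hull s q -> 0 <= m <= 1 ->
  conv_hull s (m * p.1 + (1 - m) * q.1, m * p.2 + (1 - m) * q.2).
Proof.
move=> [wp [wp0 [wp1 ->]]] [wq [wq0 [wq1 ->]]] /andP[m0 m1].
exists (fun i => m * wp i + (1 - m) * wq i); split.
  move=> i; apply: addr_ge0; apply: mulr_ge0 => //; by rewrite subr_ge0.
split.
  by rewrite big_split /= -!mulr_sumr wp1 wq1; ring.
congr pair => /=; rewrite !mulr_sumr -big_split /=; apply: eq_bigr => i _; ring.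
Qed.

Lemma conv_eq s x y : conv_hull s x -> x = y -> conv_hull s y.
Proof. by move=> h <-. Qed.

Lemma conv3 s p q r (al be ga : R) :
  conv_hull s p -> conv_hull s q -> conv_hull s r ->
  0 <= al -> 0 <= be -> 0 <= ga -> al + be + ga = 1 ->
  conv_hull s (al * p.1 + be * q.1 + ga * r.1, al * p.2 + be * q.2 + ga * r.2).
Proof.
move=> hp hq hr a0 b0 g0 sum1.
have [g1|g1] := eqVneq ga 1.
  have a00 : al = 0 by lra.
  have b00 : be = 0 by lra.
  apply: (conv_eq hr); rewrite a00 b00 g1; case: r {hr} => r1 r2 /=; congr pair; ring.
have gp : 0 < 1 - ga by lra.
have gne : 1 - ga != 0 by rewrite gt_eqF.
pose m := al / (1 - ga).
have m0 : 0 <= m by rewrite /m divr_ge0 // ltW.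
have m1 : m <= 1 by rewrite /m ler_pdivrMr // mul1r; lra.
have hP := conv2 m hp hq ltac:(by rewrite m0 m1).
have hg : 0 <= 1 - ga <= 1 by apply/andP; split; lra.
have := conv2 _ hP hr hg.
move/conv_eq; apply.
have bm : be = (1 - m) * (1 - ga) by rewrite /m mulrBl mul1r divfK //; lra.
have hk : (1 - ga) * (al / (1 - ga)) = al by rewrite mulrC divfK.
rewrite bm /m; move: hk; set k := al / (1 - ga) => hk.
by rewrite -hk; congr pair => /=; ring.
Qed.


Lemma tri_elim (a b c y : pt R) : triangle a b c y ->
  exists al be ga : R, [/\ 0 <= al, 0 <= be, 0 <= ga, al + be + ga = 1 &
    y = (al * a.1 + be * b.1 + ga * c.1, al * a.2 + be * b.2 + ga * c.2)].
Proof.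
move=> [w [w0 [w1 ->]]].
move: w1; rewrite !big_ord_recl !big_ord0 /= => w1.
exists (w ord0), (w (lift ord0 ord0)), (w (lift ord0 (lift ord0 ord0))).
split => //; first by rewrite -w1; ring.
congr pair; ring.
Qed.

Lemma tri_a (a b c : pt R) : triangle a b c a.
Proof. exact: (@conv_vertex [:: a; b; c] (@Ordinal 3 0 isT)). Qed.
Lemma tri_b (a b c : pt R) : triangle a b c b.
Proof. exact: (@conv_vertex [:: a; b; c] (@Ordinal 3 1 isT)). Qed.
Lemma tri_c (a b c : pt R) : triangle a b c c.
Proof. exact: (@conv_vertex [:: a; b; c] (@Ordinal 3 2 isT)). Qed.

Lemma feas_vertices s (T : pt R -> Prop) a b c lam u :
  (forall x, T x <-> conv_hull s x) ->
  T (hom_pt lam u a) -> T (hom_pt lam u b) -> T (hom_pt lam u c) ->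
  forall x, hom_set (triangle a b c) lam u x -> T x.
Proof.
move=> HT ha hb hc x [y [hy ->]]; apply/HT.
have [al [be [ga [a0 b0 g0 s1 ->]]]] := tri_elim hy.
have := conv3 _ _ _ (proj1 (HT _) ha) (proj1 (HT _) hb) (proj1 (HT _) hc) a0 b0 g0 s1.
move/conv_eq; apply.
have -> : ga = 1 - al - be by lra.
rewrite /hom_pt /=; congr pair; ring.
Qed.


Lemma key (T : pt R -> Prop) a b c lam u lam' u' :
  aff_indep a b c -> 0 < lam ->
  ~ (exists h : pt R, h <> (0, 0) /\
         forall v, (normal_cone T (hom_pt lam u a) v \/
                    normal_cone T (hom_pt lam u b) v \/
                    normal_cone T (hom_pt lam u c) v) -> 0 <= dot h v) ->
  (forall x, hom_set (triangle a b c) lam' u' x -> T x) -> lam <= lam' ->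
  lam' = lam /\ u' = u.
Proof.
move=> hind l0 hnc hfeas hle.
have l'0 : 0 < lam' by apply: lt_le_trans hle.
have l'ne : lam' != 0 by rewrite gt_eqF.
pose t := lam' - lam.
have inT : forall vt q, triangle a b c vt -> triangle a b c q ->
   T (lam * vt.1 + u.1 + (u'.1 + t * q.1 - u.1), lam * vt.2 + u.2 + (u'.2 + t * q.2 - u.2)).
  move=> vt q hv hq; apply: hfeas.
  exists ((lam * vt.1 + t * q.1) / lam', (lam * vt.2 + t * q.2) / lam'); split.
    have m01 : 0 <= lam / lam' <= 1.
      by apply/andP; split; [rewrite divr_ge0 // ltW | rewrite ler_pdivrMr // mul1r].
    have := conv2 _ hv hq m01; move/conv_eq; apply.
    by rewrite /t; congr pair; field.
  by rewrite /hom_pt /=; congr pair; field.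
have shift : forall q, triangle a b c q ->
    u'.1 + t * q.1 - u.1 = 0 /\ u'.2 + t * q.2 - u.2 = 0.
  move=> q hq.
  have [w1 ew1] : exists w1, w1 = u'.1 + t * q.1 - u.1 by eexists.
  have [w2 ew2] : exists w2, w2 = u'.2 + t * q.2 - u.2 by eexists.
  rewrite -ew1 -ew2.
  have [/andP[/eqP h1 /eqP h2]|hne] := boolP ((w1 == 0) && (w2 == 0)); first by [].
  exfalso; apply: hnc; exists (- w1, - w2); split.
    case=> e1 e2; move: hne.
    by rewrite -oppr_eq0 e1 -(oppr_eq0 w2) e2 eqxx.
  have gen : forall vt, triangle a b c vt -> normal_cone T (hom_pt lam u vt) =1 (fun v => normal_cone T (hom_pt lam u vt) v) ->
      forall v, normal_cone T (hom_pt lam u vt) v -> 0 <= dot (- w1, - w2) v.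
    move=> vt hvt _ v hv.
    have := hv _ (inT vt q hvt hq); rewrite -ew1 -ew2 /dot /psub /hom_pt /=.
    have -> : v.1 * (lam * vt.1 + u.1 + w1 - (lam * vt.1 + u.1)) +
              v.2 * (lam * vt.2 + u.2 + w2 - (lam * vt.2 + u.2)) = v.1 * w1 + v.2 * w2 by ring.
    have -> : - w1 * v.1 + - w2 * v.2 = - (v.1 * w1 + v.2 * w2) by ring.
    by rewrite oppr_ge0.
  move=> v [hv|[hv|hv]].
  - exact: (gen a (tri_a a b c) (fun=> erefl) v hv).
  - exact: (gen b (tri_b a b c) (fun=> erefl) v hv).
  - exact: (gen c (tri_c a b c) (fun=> erefl) v hv).
have [ha1 ha2] := shift a (tri_a a b c).
have [hb1 hb2] := shift b (tri_b a b c).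
have e1 : t * (a.1 - b.1) = 0.
  by rewrite -[RHS](subr0 0) -{1}ha1 -hb1; ring.
have e2 : t * (a.2 - b.2) = 0.
  by rewrite -[RHS](subr0 0) -{1}ha2 -hb2; ring.
have t0 : t = 0.
  move/eqP: e1; rewrite mulf_eq0 => /orP[/eqP //|]; rewrite subr_eq0 => /eqP d1.
  move/eqP: e2; rewrite mulf_eq0 => /orP[/eqP //|]; rewrite subr_eq0 => /eqP d2.
  by move: hind; rewrite /aff_indep d1 d2 !subrr !mul0r subrr eqxx.
have el : lam' = lam by move: t0; rewrite /t; lra.
split => //.
move: ha1 ha2; rewrite t0 !mul0r !addr0 => /eqP; rewrite subr_eq0 => /eqP h1 /eqP.
rewrite subr_eq0 => /eqP h2.
by rewrite (surjective_pairing u') h1 h2 -surjective_pairing.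
Qed.

End Main.
Lemma sq_bound (R : realType) (d q e : R) : 0 < e -> d * d + q * q < e * e -> `|d| < e.
Proof. move=> e0 h. have := sqr_ge0 q. rewrite expr2 => hq.
rewrite ltr_norml; apply/andP; split; nra. Qed.
Module Cl.
Import all_classical all_analysis. Import numFieldTopology.Exports numFieldNormedType.Exports.
Local Open Scope classical_set_scope.
Section S.
Variable R : realType.

Lemma sum_cont m n (F : 'I_n -> 'rV[R]_m -> R) :
  (forall i, continuous (F i)) -> continuous (fun v => \sum_(i < n) F i v).
Proof.
move=> Fc.
suff H : forall r, continuous (fun v => \sum_(i <- r) F i v) by exact: H.
elim=> [|i r IH] v.
  have -> : (fun v => \sum_(i <- [::]) F i v) = (fun=> 0) by apply: funext => w; rewrite big_nil.
  exact: cst_continuous.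
have -> : (fun v => \sum_(j <- i :: r) F j v) = (F i + (fun v => \sum_(j <- r) F j v)).
  by apply: funext => w; rewrite big_cons.
exact: (continuousD (Fc i v) (IH v)).
Qed.

Lemma coef_cont n (c : 'I_n -> R) : forall i, continuous (fun v : 'rV[R]_n => v ord0 i * c i).
Proof.
move=> i v; apply: continuousM; first exact: coord_continuous.
exact: cst_continuous.
Qed.

Lemma conv_closed (s : seq (pt R)) z : Defs.closure (conv_hull s) z -> conv_hull s z.
Proof.
move=> Hz.
set n := size s.
pose K := [set v : 'rV[R]_n | forall i, `[0, 1]%classic (v ord0 i)].
pose E := [set v : 'rV[R]_n | \sum_(i < n) v ord0 i = 1].
pose f := fun v : 'rV[R]_n => (\sum_(i < n) v ord0 i * (nth (0, 0) s i).1,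
                                \sum_(i < n) v ord0 i * (nth (0, 0) s i).2).
have Kc : compact K.
  have := (@rV_compact R n (fun=> `[0, 1]%classic) (fun=> @segment_compact R 0 1)).
  by [].
have Ec : closed E.
  have hc : continuous (fun v : 'rV[R]_n => \sum_(i < n) v ord0 i).
    by apply: sum_cont => i; exact: coord_continuous.
  move: (@closed_eq R 1) => /(proj1 (continuous_closedP _) hc). exact.
have fc : continuous f.
  move=> v.
  have h1 := @sum_cont _ _ _ (@coef_cont n (fun i : 'I_n => (nth (0, 0) s i).1)) v.
  have h2 := @sum_cont _ _ _ (@coef_cont n (fun i : 'I_n => (nth (0, 0) s i).2)) v.
  exact: (cvg_pair h1 h2).
have Cc : closed (f @` (K `&` E)).
  apply: compact_closed; first exact: norm_hausdorff.
  apply: continuous_compact; last exact: compact_closedI.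
  exact: continuous_subspaceT.
have : topology_structure.closure (f @` (K `&` E)) z.
  move=> B /nbhs_ballP [e e0 eB].
  have [y [[w [w0 [w1 ->]]] yz]] := Hz e e0.
  exists (f (\row_i w i)); split.
    exists (\row_i w i) => //; split.
      move=> i; rewrite /= mxE in_itv /= w0 /= -w1.
      by rewrite (bigD1 i) //= lerDl sumr_ge0.
    by rewrite /E /=; under eq_bigr do rewrite mxE.
  apply: eB.
  have -> : f (\row_i w i) = (\sum_(i < size s) w i * (nth (0, 0) s i).1,
         \sum_(i < size s) w i * (nth (0, 0) s i).2).
    by rewrite /f; congr pair; apply: eq_bigr => i _; rewrite mxE.
  move: yz; rewrite /dist2 /dot /psub /=.
  set y1 := \sum_(i < size s) _. set y2 := \sum_(i < size s) _.
  move=> yz.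
  have e0' : 0 < e by [].
  split; rewrite /ball /= distrC.
    exact: (@sq_bound R _ (y2 - z.2) e e0').
  by apply: (@sq_bound R _ (y1 - z.1) e e0'); rewrite addrC.
move/Cc => [v [Kv Ev] <-].
exists (fun i => v ord0 i); split; first by move=> i; have := Kv i; rewrite /= in_itv /= => /andP[].
by split.
Qed.
End S.
End Cl.

Theorem proposition7p3 (R : realType) (T : pt R -> Prop) (a b c : pt R)
    (lam0 : R) (u0 : pt R) :
  is_polytope T -> aff_indep a b c ->
  is_optimal (triangle a b c) T lam0 u0 ->
  (exists S : pt R -> Prop, inbody a b c T S) ->
  inbody a b c T (hom_set (triangle a b c) lam0 u0) /\
  (forall S : pt R -> Prop, inbody a b c T S ->
     forall x, S x <-> hom_set (triangle a b c) lam0 u0 x).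
Proof.
move=> [s Hs] hind [l00 [hfeas0 hopt]] [S0 hS0].
have feas_of : forall lam u, boundary T (hom_pt lam u a) -> boundary T (hom_pt lam u b) ->
    boundary T (hom_pt lam u c) -> forall x, hom_set (triangle a b c) lam u x -> T x.
  have cl : forall z, Defs.closure T z -> T z.
    move=> z hz; apply/Hs; apply: Cl.conv_closed => e e0.
    have [y [Ty d]] := hz e e0; exists y; split => //; exact/Hs.
  move=> lam u [ca _] [cb _] [cc _].
  exact: (feas_vertices _ Hs (cl _ ca) (cl _ cb) (cl _ cc)).
case: hS0 => lam [u [l0 [hSx [ba [bb [bc hnc]]]]]].
have [e1 e2] := key hind l0 hnc hfeas0 (hopt lam u (ltW l0) (feas_of lam u ba bb bc)).
split.
  exists lam0, u0; rewrite e1 e2; do ! split => //.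
move=> S [lam' [u' [l'0 [hS' [ba' [bb' [bc' hnc']]]]]]] x.
have [f1 f2] := key hind l'0 hnc' hfeas0 (hopt lam' u' (ltW l'0) (feas_of lam' u' ba' bb' bc')).
by rewrite hS' f1 f2.
Qed.
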